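(* Let $f:\mathbb R^{n+m}\to\mathbb R$ be convex and let $g(x) = \inf_y f(x,y)$, assumed finite for every $x\in\mathbb R^n$ (so $g:\mathbb R^n\to\mathbb R$ is convex). Let $H_1:\mathbb R^n\to\mathbb R^n$ be the single-valued inverse of $x\mapsto x+\nabla_xg$ (so $H_1(u)=x\iff u\in x+\nabla_xg$) and $H:\mathbb R^{n+m}\to\mathbb R^{n+m}$ the single-valued inverse of $(x,y)\mapsto (x,y)+\nabla_{(x,y)}f$ (so $H(u,v)=(x,y)\iff (u,v)\in (x,y)+\nabla_{(x,y)}f$); these inverses exist. Define $J:\mathbb R^{n}\times \mathbb R^{n}\times \mathbb R^{m} \to \mathbb R^{m}$ by $J(x,u,y) = y - \pi_2 H(H_1(x+u)+u,y)$, where $\pi_2:\mathbb R^{n+m}\to\mathbb R^m$ is the second projection. Then $J(x,u,\gamma) =0$ for all $x\in \mathbb R^n$, all $\gamma\in \operatorname{argmin}_f(x)$ and all $u\in \nabla_x g$.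
   Context: For $h:\mathbb R^k\to\mathbb R$ and $z_0\in\mathbb R^k$, $\nabla_{z_0}h=\{u\in\mathbb R^k: h(z)-h(z_0)\ge u\cdot(z-z_0)\text{ for all } z \text{ sufficiently near } z_0\}$. $\operatorname{argmin}_f(x)=\{\gamma\in\mathbb R^m: \inf_{y}f(x,y)=f(x,\gamma)\}$. *)

(* Defs.v *)
(* R^k is rendered as 'rV[R]_k. *)
From HB Require Import structures.
From mathcomp Require Import all_boot all_order all_algebra.
From mathcomp Require Import all_classical all_reals all_analysis.
Set Implicit Arguments. Unset Strict Implicit. Unset Printing Implicit Defensive.
Import Order.TTheory GRing.Theory Num.Theory numFieldNormedType.Exports.
Local Open Scope classical_set_scope.
Local Open Scope ring_scope.

Definition dotv (R : realType) (k : nat) (u v : 'rV[R]_k) : R :=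
  \sum_(i < k) u 0 i * v 0 i.

Definition convex_fun (R : realType) (k : nat) (h : 'rV[R]_k -> R) : Prop :=
  forall (a b : 'rV[R]_k) (t : R), 0 <= t <= 1 ->
    h (t *: a + (1 - t) *: b) <= t * h a + (1 - t) * h b.

Definition subgrad (R : realType) (k : nat) (h : 'rV[R]_k -> R)
    (z0 u : 'rV[R]_k) : Prop :=
  \forall z \near z0, h z - h z0 >= dotv u (z - z0).

(* argmin_f(x) = { gamma | inf_y f(x,y) = f(x,gamma) }, (x,y) ~ row_mx x y *)
Definition argmin (R : realType) (n m : nat) (f : 'rV[R]_(n + m) -> R)
    (x : 'rV[R]_n) : set 'rV[R]_m :=
  [set gam | inf [set f (row_mx x y) | y in [set: 'rV[R]_m]] = f (row_mx x gam)].

Definition Jmap (R : realType) (n m : nat) (H1 : 'rV[R]_n -> 'rV[R]_n)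
    (H : 'rV[R]_(n + m) -> 'rV[R]_(n + m)) (x u : 'rV[R]_n) (y : 'rV[R]_m)
    : 'rV[R]_m :=
  y - rsubmx (H (row_mx (H1 (x + u) + u) y)).

(* Main.v *)
Require Import Defs.
From HB Require Import structures.
From mathcomp Require Import all_boot all_order all_algebra.
From mathcomp Require Import all_classical all_reals all_analysis.
Import Order.TTheory GRing.Theory Num.Theory numFieldNormedType.Exports.
Local Open Scope classical_set_scope.
Local Open Scope ring_scope.

Lemma dotv_row0 (R : realType) (n m : nat) (u : 'rV[R]_n) (w : 'rV[R]_(n + m)) :
  dotv (row_mx u 0) w = dotv u (lsubmx w).
Proof.
rewrite /dotv big_split_ord /= [X in _ + X]big1 ?addr0; last first.
  by move=> i _; rewrite row_mxEr mxE mul0r.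
by apply: eq_bigr => i _; rewrite row_mxEl mxE.
Qed.

Theorem proposition2p13 (R : realType) (n m : nat)
    (f : 'rV[R]_(n + m) -> R) (g : 'rV[R]_n -> R)
    (H1 : 'rV[R]_n -> 'rV[R]_n) (H : 'rV[R]_(n + m) -> 'rV[R]_(n + m)) :
  convex_fun f ->
  (forall x : 'rV[R]_n,
      has_lbound [set f (row_mx x y) | y in [set: 'rV[R]_m]]) ->
  (forall x : 'rV[R]_n,
      g x = inf [set f (row_mx x y) | y in [set: 'rV[R]_m]]) ->
  (forall u x : 'rV[R]_n, H1 u = x <-> subgrad g x (u - x)) ->
  (forall w z : 'rV[R]_(n + m), H w = z <-> subgrad f z (w - z)) ->
  forall (x u : 'rV[R]_n) (gam : 'rV[R]_m),
    argmin f x gam -> subgrad g x u -> Jmap H1 H x u gam = 0.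
Proof.
move=> _ Hlb Hg HH1 HH x u gam Harg Hsg.
have H1x : H1 (x + u) = x by apply/HH1; rewrite [x + u]addrC addrK.
have Hm : H (row_mx (x + u) gam) = row_mx x gam.
  apply/HH; rewrite opp_row_mx add_row_mx [x + u]addrC addrK subrr.
  rewrite /subgrad.
  move: Hsg => /nbhs_ballP [e e0 He].
  apply/nbhs_ballP; exists e => // z [_ Hz].
  have Hb : ball x e (lsubmx z).
    split => // i j; rewrite mxE; have := Hz i (lshift m j); by rewrite row_mxEl.
  have := He _ Hb.
  rewrite dotv_row0 linearB /= row_mxKl.
  have Hfx : f (row_mx x gam) = g x by rewrite Hg.
  have Hfz : g (lsubmx z) <= f z.
    rewrite Hg; apply: ge_inf => //; exists (rsubmx z) => //; by rewrite hsubmxK.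
  move=> Hle; apply: (le_trans Hle); rewrite Hfx; exact: lerB.
by rewrite /Jmap H1x Hm row_mxKr subrr.
Qed.
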